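(* Let $(X,d)$ be a nonempty compact and rectifiably path-connected metric space and let $F:(X,d)\rightarrow (K(X),H)$ be a set-valued pointwise contraction. Then $F:(X,d_r)\rightarrow(K(X),H_r)$ is shrinking, i.e., $H_r(F(x),F(y))<d_r(x,y)$ for all $x,y\in X$ with $x\neq y$.
   Context: The length of a continuous path $p:[0,1]\to X$ is $l(p)=\sup\sum_{i=1}^n d(p(t_{i-1}),p(t_i))$ over finite partitions $0=t_0<\cdots<t_n=1$; $X$ is rectifiably path-connected if every two points are joined by a continuous path of finite length. $d_r(x,y)=\inf\{l(p):p$ a rectifiable path from $x$ to $y\}$. $K(X)$ is the set of nonempty compact subsets of $X$; $H$ and $H_r$ are the Hausdorff distances associated with $d$ and $d_r$ respectively, where for a metric $\rho$, $H_\rho(A,B)=\max\{\sup_{a\in A}\inf_{b\in B}\rho(a,b),\sup_{b\in B}\inf_{a\in A}\rho(a,b)\}$. $F$ is a set-valued pointwise contraction if for every $x\in X$ there exist $\beta_x\in[0,1)$ and an open neighborhood $N(x)$ with $H(F(x),F(y))\le\beta_x d(x,y)$ for all $y\in N(x)$. *)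

(* Defs.v *)
From Stdlib Require Import Reals.
From Coquelicot Require Import Coquelicot.
Open Scope R_scope.

Section MetricDefs.
Context {X : Type} (d : X -> X -> R).

Definition is_metric : Prop :=
  (forall x y, 0 <= d x y) /\
  (forall x y, d x y = 0 <-> x = y) /\
  (forall x y, d x y = d y x) /\
  (forall x y z, d x z <= d x y + d y z).

Definition d_open (U : X -> Prop) : Prop :=
  forall z, U z -> exists e, 0 < e /\ forall w, d z w < e -> U w.

Definition d_compact (A : X -> Prop) : Prop :=
  forall (I : Type) (U : I -> X -> Prop),
    (forall i, d_open (U i)) ->
    (forall x, A x -> exists i, U i x) ->
    exists l : list I, forall x, A x -> exists i, List.In i l /\ U i x.

Definition in_KX (A : X -> Prop) : Prop := (exists a, A a) /\ d_compact A.

(* continuous path p : [0,1] -> X from x to y (values outside [0,1] ignored) *)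
Definition is_path (p : R -> X) (x y : X) : Prop :=
  p 0 = x /\ p 1 = y /\
  forall t, 0 <= t <= 1 -> forall eps, 0 < eps ->
    exists delta, 0 < delta /\
      forall s, 0 <= s <= 1 -> Rabs (s - t) < delta -> d (p s) (p t) < eps.

Fixpoint psum (f : nat -> R) (n : nat) : R :=
  match n with O => 0 | S k => psum f k + f k end.

Definition is_partition (t : nat -> R) (n : nat) : Prop :=
  t O = 0 /\ t n = 1 /\ forall i, (i < n)%nat -> t i < t (S i).

Definition plength (p : R -> X) : Rbar :=
  Lub_Rbar (fun s => exists t n, is_partition t n /\
                       s = psum (fun i => d (p (t i)) (p (t (S i)))) n).

Definition rectifiable (p : R -> X) : Prop := is_finite (plength p).

Definition rect_path_connected : Prop :=
  forall x y, exists p, is_path p x y /\ rectifiable p.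

Definition d_r_bar (x y : X) : Rbar :=
  Glb_Rbar (fun L => exists p, is_path p x y /\ plength p = Finite L).

(* real-valued d_r (finite when X is rectifiably path-connected) *)
Definition d_r (x y : X) : R := real (d_r_bar x y).

End MetricDefs.

Definition Rbar_maxr (a b : Rbar) : Rbar := if Rbar_le_dec a b then b else a.

Definition excess {X : Type} (rho : X -> X -> R) (A B : X -> Prop) : Rbar :=
  Lub_Rbar (fun s => exists a, A a /\
     s = real (Glb_Rbar (fun u => exists b, B b /\ u = rho a b))).

Definition hausdorff {X : Type} (rho : X -> X -> R) (A B : X -> Prop) : Rbar :=
  Rbar_maxr (excess rho A B) (excess rho B A).

Definition pointwise_contraction {X : Type} (d : X -> X -> R)
    (F : X -> X -> Prop) : Prop :=
  forall x, exists beta, 0 <= beta < 1 /\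
    exists N : X -> Prop, d_open d N /\ N x /\
      forall y, N y -> Rbar_le (hausdorff d (F x) (F y)) (Finite (beta * d x y)).

(* Main.v *)
Require Import Defs.
From Stdlib Require Import Reals Lra Lia ZArith Classical ClassicalEpsilon Cantor List.
From Coquelicot Require Import Coquelicot.
Open Scope R_scope.

Lemma glb_fin (E : R -> Prop) (m x0 : R) :
  E x0 -> (forall x, E x -> m <= x) ->
  exists g, Glb_Rbar E = Finite g /\ m <= g /\ (forall x, E x -> g <= x) /\
    (forall e, 0 < e -> exists x, E x /\ x < g + e).
Proof.
  intros H0 Hm. destruct (Glb_Rbar_correct E) as [Hlb Hgl].
  assert (Hle1 : Rbar_le (Glb_Rbar E) (Finite x0)) by (apply Hlb; auto).
  assert (Hle2 : Rbar_le (Finite m) (Glb_Rbar E)) by (apply Hgl; intros x Hx; simpl; auto).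
  destruct (Glb_Rbar E) as [g| |] eqn:Eg; simpl in *; try contradiction.
  exists g; split; auto; split; auto; split.
  - intros x Hx. exact (Hlb x Hx).
  - intros e He. apply NNPP; intro Hn.
    assert (Hl : Rbar_le (Finite (g + e)) (Finite g)).
    { apply Hgl. intros x Hx. simpl. apply Rnot_lt_le. intro Hc. apply Hn. exists x; auto. }
    simpl in Hl. lra.
Qed.

Lemma lub_fin (E : R -> Prop) (M x0 : R) :
  E x0 -> (forall x, E x -> x <= M) ->
  exists l, Lub_Rbar E = Finite l /\ l <= M /\ (forall x, E x -> x <= l).
Proof.
  intros H0 HM. destruct (Lub_Rbar_correct E) as [Hub Hl].
  assert (Hle1 : Rbar_le (Finite x0) (Lub_Rbar E)) by (apply Hub; auto).
  assert (Hle2 : Rbar_le (Lub_Rbar E) (Finite M)) by (apply Hl; intros x Hx; simpl; auto).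
  destruct (Lub_Rbar E) as [g| |] eqn:Eg; simpl in *; try contradiction.
  exists g; split; [auto|split; [auto|]].
  intros x Hx. exact (Hub x Hx).
Qed.

Lemma maxr_le (a b c : Rbar) : Rbar_le (Rbar_maxr a b) c -> Rbar_le a c /\ Rbar_le b c.
Proof.
  unfold Rbar_maxr. destruct (Rbar_le_dec a b) as [H|H]; intros Hc; split; auto.
  - eapply Rbar_le_trans; eauto.
  - apply Rbar_not_le_lt in H. apply Rbar_lt_le in H. eapply Rbar_le_trans; eauto.
Qed.

Lemma maxr_le2 (a b c : Rbar) : Rbar_le a c -> Rbar_le b c -> Rbar_le (Rbar_maxr a b) c.
Proof. unfold Rbar_maxr. destruct (Rbar_le_dec a b); auto. Qed.

Lemma excess_le {X : Type} (rho : X -> X -> R) (A B : X -> Prop) (M : R) :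
  0 <= M -> (forall a, A a -> exists b, B b /\ rho a b <= M) ->
  Rbar_le (excess rho A B) (Finite M).
Proof.
  intros HM H. unfold excess. destruct (Lub_Rbar_correct (fun s => exists a, A a /\
     s = real (Glb_Rbar (fun u => exists b, B b /\ u = rho a b)))) as [_ Hl].
  apply Hl. intros s [a [Ha ->]]. simpl.
  destruct (H a Ha) as [b [Hb Hab]].
  destruct (Glb_Rbar_correct (fun u => exists b, B b /\ u = rho a b)) as [Hlb _].
  assert (Hg : Rbar_le (Glb_Rbar (fun u => exists b, B b /\ u = rho a b)) (Finite (rho a b))).
  { apply Hlb. exists b; auto. }
  destruct (Glb_Rbar _); simpl in *; lra.
Qed.

Lemma haus_le {X : Type} (rho : X -> X -> R) (A B : X -> Prop) (M : R) :
  0 <= M -> (forall a, A a -> exists b, B b /\ rho a b <= M) ->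
  (forall b, B b -> exists a, A a /\ rho b a <= M) ->
  Rbar_le (hausdorff rho A B) (Finite M).
Proof. intros. unfold hausdorff. apply maxr_le2; apply excess_le; auto. Qed.

Section Met.
Context {X : Type} (d : X -> X -> R) (Hd : is_metric d).

Lemma d_pos x y : 0 <= d x y. Proof. destruct Hd as [H _]; auto. Qed.
Lemma d_refl x : d x x = 0. Proof. destruct Hd as [_ [H _]]. apply H; auto. Qed.
Lemma d_eq x y : d x y = 0 -> x = y. Proof. destruct Hd as [_ [H _]]. apply H; auto. Qed.
Lemma d_sym x y : d x y = d y x. Proof. destruct Hd as [_ [_ [H _]]]. apply H; auto. Qed.
Lemma d_tri x y z : d x z <= d x y + d y z. Proof. destruct Hd as [_ [_ [_ H]]]. apply H; auto. Qed.

Definition Hle (A B : X -> Prop) (r : R) :=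
  (forall a, A a -> forall e, 0 < e -> exists b, B b /\ d a b < r + e) /\
  (forall b, B b -> forall e, 0 < e -> exists a, A a /\ d b a < r + e).

Lemma Hle_refl A : Hle A A 0.
Proof. split; intros a Ha e He; exists a; rewrite d_refl; split; auto; lra. Qed.

Lemma Hle_sym A B r : Hle A B r -> Hle B A r.
Proof. intros [H1 H2]; split; auto. Qed.

Lemma Hle_mono A B r r' : r <= r' -> Hle A B r -> Hle A B r'.
Proof.
  intros Hr [H1 H2]; split.
  - intros a Ha e He. destruct (H1 a Ha e He) as [b [Hb Hab]]; exists b; split; auto; lra.
  - intros a Ha e He. destruct (H2 a Ha e He) as [b [Hb Hab]]; exists b; split; auto; lra.
Qed.

Lemma Hle_trans A B C r1 r2 : Hle A B r1 -> Hle B C r2 -> Hle A C (r1 + r2).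
Proof.
  intros [H1 H2] [H3 H4]; split.
  - intros a Ha e He. destruct (H1 a Ha (e/2)) as [b [Hb Hab]]; [lra|].
    destruct (H3 b Hb (e/2)) as [c [Hc Hbc]]; [lra|].
    exists c; split; auto. pose proof (d_tri a b c); lra.
  - intros c Hc e He. destruct (H4 c Hc (e/2)) as [b [Hb Hcb]]; [lra|].
    destruct (H2 b Hb (e/2)) as [a [Ha Hba]]; [lra|].
    exists a; split; auto. pose proof (d_tri c b a); lra.
Qed.

Lemma Hle_lim A B r : (forall e, 0 < e -> Hle A B (r + e)) -> Hle A B r.
Proof.
  intros H; split.
  - intros a Ha e He. destruct (H (e/2)) as [H1 _]; [lra|].
    destruct (H1 a Ha (e/2)) as [b [Hb Hab]]; [lra|]. exists b; split; auto; lra.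
  - intros a Ha e He. destruct (H (e/2)) as [_ H1]; [lra|].
    destruct (H1 a Ha (e/2)) as [b [Hb Hab]]; [lra|]. exists b; split; auto; lra.
Qed.

Lemma excess_Hle A B r : (exists b, B b) -> Rbar_le (excess d A B) (Finite r) ->
  forall a, A a -> forall e, 0 < e -> exists b, B b /\ d a b < r + e.
Proof.
  intros [b0 Hb0] Hex a Ha e He.
  destruct (glb_fin (fun u => exists b, B b /\ u = d a b) 0 (d a b0)) as [g [Eg [Hg0 [Hg1 Hg2]]]].
  { exists b0; auto. }
  { intros x [b [_ ->]]; apply d_pos. }
  unfold excess in Hex.
  destruct (Lub_Rbar_correct (fun s => exists a, A a /\
     s = real (Glb_Rbar (fun u => exists b, B b /\ u = d a b)))) as [Hub _].
  assert (Hs : Rbar_le (Finite g) (Lub_Rbar (fun s => exists a, A a /\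
     s = real (Glb_Rbar (fun u => exists b, B b /\ u = d a b))))).
  { apply Hub. exists a; split; auto. rewrite Eg; reflexivity. }
  pose proof (Rbar_le_trans _ _ _ Hs Hex) as Hgr. simpl in Hgr.
  destruct (Hg2 e He) as [x [[b [Hb ->]] Hx]]. exists b; split; auto; lra.
Qed.

Lemma H_to_Hle A B r : (exists a, A a) -> (exists b, B b) ->
  Rbar_le (hausdorff d A B) (Finite r) -> Hle A B r.
Proof.
  intros HA HB H. unfold hausdorff in H. apply maxr_le in H as [H1 H2].
  split; eapply excess_Hle; eauto.
Qed.

End Met.

Lemma inv_small e : 0 < e -> exists N, forall n, (N <= n)%nat -> / INR (S n) < e.
Proof.
  intros He. destruct (archimed_cor1 e He) as [N0 [H1 H2]]. exists N0. intros n Hn.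
  assert (0 < INR N0) by (apply lt_0_INR; lia).
  assert (INR N0 <= INR (S n)) by (apply le_INR; lia).
  assert (/ INR (S n) <= / INR N0) by (apply Rinv_le_contravar; lra). lra.
Qed.

Definition sincr (f : nat -> nat) := forall n, (f n < f (S n))%nat.

Lemma sincr_ge f : sincr f -> forall n, (n <= f n)%nat.
Proof. intros H n; induction n; [lia|]. specialize (H n); lia. Qed.

Lemma sincr_mono f : sincr f -> forall m n, (m <= n)%nat -> (f m <= f n)%nat.
Proof. intros H m n Hmn; induction Hmn; [lia|]. specialize (H m0); lia. Qed.


Lemma sincr_comp f g : sincr f -> sincr g -> sincr (fun n => f (g n)).
Proof.
  intros Hf Hg n. specialize (Hg n).
  pose proof (sincr_mono f Hf (S (g n)) (g (S n)) Hg). specialize (Hf (g n)). lia.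
Qed.

Lemma fold_max_ge {I : Type} (f : I -> nat) (l : list I) i :
  In i l -> (f i <= fold_right (fun j acc => Nat.max (f j) acc) 0%nat l)%nat.
Proof.
  induction l as [|a l IH]; simpl; [tauto|]. intros [->|H]; [lia|]. specialize (IH H); lia.
Qed.

Section Comp.
Context {X : Type} (d : X -> X -> R) (Hd : is_metric d).

Definition conv (v : nat -> X) z := forall e, 0 < e -> exists N, forall n, (N <= n)%nat -> d (v n) z < e.

Lemma conv_sub v z f : conv v z -> sincr f -> conv (fun n => v (f n)) z.
Proof.
  intros H Hf e He. destruct (H e He) as [N HN]. exists N. intros n Hn.
  apply HN. pose proof (sincr_ge f Hf n); lia.
Qed.

Lemma conv_unique v z z' : conv v z -> conv v z' -> z = z'.
Proof.
  intros H1 H2. apply (d_eq d Hd). apply Rle_antisym; [|apply (d_pos d Hd)].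
  apply Rnot_lt_le; intro Hp.
  destruct (H1 (d z z' / 2)) as [N1 HN1]; [lra|].
  destruct (H2 (d z z' / 2)) as [N2 HN2]; [lra|].
  specialize (HN1 (N1 + N2)%nat). specialize (HN2 (N1 + N2)%nat).
  assert (A1 : (N1 <= N1 + N2)%nat) by lia. assert (A2 : (N2 <= N1 + N2)%nat) by lia.
  specialize (HN1 A1). specialize (HN2 A2).
  pose proof (d_tri d Hd z (v (N1+N2)%nat) z'). rewrite (d_sym d Hd z (v (N1+N2)%nat)) in H. lra.
Qed.

Lemma cluster (Hc : d_compact d (fun _ => True)) (v : nat -> X) :
  exists z, forall e, 0 < e -> forall N, exists n, (N <= n)%nat /\ d (v n) z < e.
Proof.
  apply NNPP; intro Hn.
  assert (H : forall z, exists e, 0 < e /\ exists N, forall n, (N <= n)%nat -> e <= d (v n) z).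
  { intro z. apply NNPP; intro H1. apply Hn. exists z. intros e He N.
    apply NNPP; intro H2. apply H1. exists e; split; auto. exists N. intros n Hn'.
    apply Rnot_lt_le. intro H3. apply H2. exists n; auto. }
  set (I := { p : X * R * nat | 0 < snd (fst p) /\
              forall n, (snd p <= n)%nat -> snd (fst p) <= d (v n) (fst (fst p)) }).
  set (U := fun (i : I) w => d (fst (fst (proj1_sig i))) w < snd (fst (proj1_sig i))).
  destruct (Hc I U) as [l Hl].
  - intros i z Hz. exists (snd (fst (proj1_sig i)) - d (fst (fst (proj1_sig i))) z).
    unfold U in *. split; [lra|]. intros w Hw.
    pose proof (d_tri d Hd (fst (fst (proj1_sig i))) z w). lra.
  - intros z _. destruct (H z) as [e [He [N HN]]].
    exists (exist _ (z, e, N) (conj He HN)). unfold U; simpl. rewrite (d_refl d Hd). auto.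
  - set (M := fold_right (fun j acc => Nat.max (snd (proj1_sig j)) acc) 0%nat l).
    destruct (Hl (v M) Logic.I) as [i [Hi Hu]].
    pose proof (fold_max_ge (fun j : I => snd (proj1_sig j)) l i Hi) as HM.
    destruct (proj2_sig i) as [He HN]. unfold U in Hu; simpl in *.
    specialize (HN M HM). rewrite (d_sym d Hd) in HN. lra.
Qed.

Lemma seqcomp (Hc : d_compact d (fun _ => True)) (v : nat -> X) :
  exists psi, sincr psi /\ exists z, conv (fun n => v (psi n)) z.
Proof.
  destruct (cluster Hc v) as [z Hz].
  set (next := fun m k => epsilon (inhabits 0%nat)
                 (fun n => (m < n)%nat /\ d (v n) z < / INR (S k))).
  assert (Hnext : forall m k, (m < next m k)%nat /\ d (v (next m k)) z < / INR (S k)).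
  { intros m k. unfold next. apply epsilon_spec.
    destruct (Hz (/ INR (S k))) with (N := S m) as [n [H1 H2]].
    - apply Rinv_0_lt_compat, lt_0_INR; lia.
    - exists n; split; [lia|auto]. }
  set (psi := fix psi k := match k with O => next O O | S k' => next (psi k') k end).
  exists psi. split.
  - intro n. simpl. apply Hnext.
  - exists z. intros e He. destruct (inv_small e He) as [N HN]. exists N. intros n Hn.
    assert (d (v (psi n)) z < / INR (S n)).
    { destruct n; simpl; apply Hnext. }
    specialize (HN n Hn). lra.
Qed.

Lemma compact_closed (A : X -> Prop) (HA : d_compact d A) (v : nat -> X) z :
  (forall n, A (v n)) -> conv v z -> A z.
Proof.
  intros Hv Hcv. apply NNPP; intro Hz.
  set (U := fun (k : nat) w => / INR (S k) < d z w).
  destruct (HA nat U) as [l Hl].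
  - intros k w Hw. exists (d z w - / INR (S k)). unfold U in *. split; [lra|].
    intros w' Hw'. pose proof (d_tri d Hd z w' w). rewrite (d_sym d Hd w' w) in H. lra.
  - intros a Ha. assert (Hp : 0 < d z a).
    { destruct (Rle_lt_or_eq_dec 0 (d z a) (d_pos d Hd z a)) as [H|H]; auto.
      symmetry in H. apply (d_eq d Hd) in H. subst; contradiction. }
    destruct (inv_small _ Hp) as [N HN]. exists N. apply HN; lia.
  - set (K := fold_right (fun j acc => Nat.max j acc) 0%nat l).
    destruct (Hcv (/ INR (S K))) as [N HN]. { apply Rinv_0_lt_compat, lt_0_INR; lia. }
    destruct (Hl (v N) (Hv N)) as [k [Hk Hu]]. unfold U in Hu.
    pose proof (fold_max_ge (fun j => j) l k Hk) as HkK. simpl in HkK.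
    assert (/ INR (S K) <= / INR (S k)).
    { apply Rinv_le_contravar; [apply lt_0_INR; lia| apply le_INR; fold K in HkK; lia]. }
    specialize (HN N (le_n _)). rewrite (d_sym d Hd) in HN. lra.
Qed.

Section Diag.
Context (Hc : d_compact d (fun _ => True)).

Definition sub (w : nat -> X) : nat -> nat :=
  epsilon (inhabits (fun n : nat => n)) (fun th => sincr th /\ exists z, conv (fun n => w (th n)) z).

Lemma sub_spec w : sincr (sub w) /\ exists z, conv (fun n => w (sub w n)) z.
Proof. unfold sub. apply epsilon_spec. apply seqcomp; auto. Qed.

Variable u : nat -> nat -> X.

Fixpoint Psi (k : nat) : nat -> nat :=
  match k with O => fun n => n | S k' => fun n => Psi k' (sub (fun m => u (Psi k' m) k') n) end.

Lemma Psi_sincr k : sincr (Psi k).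
Proof.
  induction k; simpl. { intro n; lia. }
  apply (sincr_comp (Psi k) _ IHk). apply sub_spec.
Qed.

Lemma Psi_ext k m : exists th, sincr th /\ forall n, Psi (k + m) n = Psi k (th n).
Proof.
  induction m.
  - exists (fun n => n). split; [intro; lia|]. intro n. rewrite Nat.add_0_r. auto.
  - destruct IHm as [th [Hth Heq]].
    exists (fun n => th (sub (fun m0 => u (Psi (k + m) m0) (k + m)) n)). split.
    + apply sincr_comp; auto. apply sub_spec.
    + intro n. rewrite Nat.add_succ_r. simpl. apply Heq.
Qed.

Lemma diag : exists phi, sincr phi /\ forall j, exists z, conv (fun n => u (phi n) j) z.
Proof.
  exists (fun n => Psi (S n) n). split.
  - intro n. change (Psi (S (S n)) (S n)) with
      (Psi (S n) (sub (fun m => u (Psi (S n) m) (S n)) (S n))).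
    pose proof (sincr_ge _ (proj1 (sub_spec (fun m => u (Psi (S n) m) (S n)))) (S n)).
    pose proof (sincr_mono _ (Psi_sincr (S n)) _ _ H).
    pose proof (Psi_sincr (S n) n). lia.
  - intro j. destruct (sub_spec (fun m => u (Psi j m) j)) as [_ [z Hz]].
    exists z. intros e He. destruct (Hz e He) as [N HN]. exists (N + j)%nat. intros n Hn.
    destruct (Psi_ext (S j) (n - j)) as [th [Hth Heq]].
    replace (S n) with (S j + (n - j))%nat by lia. rewrite Heq. simpl.
    apply HN. pose proof (sincr_ge th Hth n). lia.
Qed.
End Diag.
End Comp.

Definition fl (r : R) : nat := Z.to_nat (up r - 1).

Lemma fl_spec r : 0 <= r -> INR (fl r) <= r < INR (fl r) + 1.
Proof.
  intros Hr. destruct (archimed r) as [H1 H2].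
  assert (Hz : (0 <= up r - 1)%Z).
  { assert (IZR 0 < IZR (up r)) by lra. apply lt_IZR in H. lia. }
  unfold fl. rewrite INR_IZR_INZ, Z2Nat.id by auto. rewrite minus_IZR. simpl. lra.
Qed.

Definition idx (N : nat) (t : R) : nat := Nat.min N (fl (t * INR N)).

Lemma idx_spec N t : 0 <= t <= 1 ->
  (idx N t <= N)%nat /\ INR (idx N t) <= t * INR N /\ t * INR N < INR (idx N t) + 1.
Proof.
  intros Ht. assert (HN : 0 <= INR N) by apply pos_INR.
  assert (H0 : 0 <= t * INR N) by nra.
  destruct (fl_spec _ H0) as [H1 H2]. unfold idx.
  destruct (Nat.le_ge_cases N (fl (t * INR N))) as [H|H].
  - rewrite Nat.min_l by auto. split; [lia|]. split; [|nra].
    apply le_INR in H. nra.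
  - rewrite Nat.min_r by auto. split; [lia|]. split; lra.
Qed.

Lemma idx_0 N : idx N 0 = 0%nat.
Proof.
  destruct (idx_spec N 0) as [_ [H _]]; [lra|]. rewrite Rmult_0_l in H.
  destruct (idx N 0); auto. rewrite S_INR in H. pose proof (pos_INR n). lra.
Qed.

Lemma idx_1 N : idx N 1 = N.
Proof.
  destruct (idx_spec N 1) as [H1 [_ H]]; [lra|]. rewrite Rmult_1_l in H.
  assert (INR N < INR (idx N 1 + 1)) by (rewrite plus_INR; simpl; lra).
  apply INR_lt in H0. lia.
Qed.

Lemma idx_diff N s t : 0 <= s <= 1 -> 0 <= t <= 1 ->
  Rabs (INR (idx N s) - INR (idx N t)) <= INR N * Rabs (s - t) + 1.
Proof.
  intros Hs Ht. destruct (idx_spec N s Hs) as [_ [A1 A2]].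
  destruct (idx_spec N t Ht) as [_ [B1 B2]].
  assert (HN : 0 <= INR N) by apply pos_INR.
  replace (INR N * Rabs (s - t)) with (Rabs (s * INR N - t * INR N)).
  2:{ rewrite <- Rmult_minus_distr_r, Rabs_mult, (Rabs_right (INR N)) by lra. ring. }
  unfold Rabs; repeat destruct Rcase_abs; lra.
Qed.

Definition rj (j : nat) : R :=
  Rmin 1 (INR (fst (Cantor.of_nat j)) / INR (S (snd (Cantor.of_nat j)))).

Lemma rj_range j : 0 <= rj j <= 1.
Proof.
  unfold rj. split; [|apply Rmin_l]. apply Rmin_glb; [lra|].
  apply Rdiv_le_0_compat; [apply pos_INR| apply lt_0_INR; lia].
Qed.

Lemma rj_dense t b : 0 <= t <= 1 -> exists j, Rabs (t - rj j) <= / INR (S b).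
Proof.
  intros Ht. exists (Cantor.to_nat (idx (S b) t, b)). unfold rj.
  rewrite Cantor.cancel_of_to. simpl fst; simpl snd.
  destruct (idx_spec (S b) t Ht) as [H1 [H2 H3]].
  assert (HS : 0 < INR (S b)) by (apply lt_0_INR; lia).
  assert (Hle : INR (idx (S b) t) / INR (S b) <= 1).
  { apply le_INR in H1. unfold Rdiv. apply (Rmult_le_reg_r (INR (S b))); auto.
    rewrite Rmult_assoc, Rinv_l; lra. }
  rewrite Rmin_right by auto.
  assert (E : t - INR (idx (S b) t) / INR (S b) = (t * INR (S b) - INR (idx (S b) t)) / INR (S b)).
  { field. lra. }
  rewrite E. unfold Rdiv. rewrite Rabs_mult, (Rabs_right (/ _)).
  2:{ apply Rle_ge. left. apply Rinv_0_lt_compat; auto. }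
  rewrite <- (Rmult_1_l (/ INR (S b))) at 2. apply Rmult_le_compat_r.
  { left; apply Rinv_0_lt_compat; auto. }
  unfold Rabs; destruct Rcase_abs; lra.
Qed.

Section AA.
Context {X : Type} (d : X -> X -> R) (Hd : is_metric d) (Hc : d_compact d (fun _ => True)).

Definition cauchy (w : nat -> X) := forall e, 0 < e -> exists N, forall m n,
  (N <= m)%nat -> (N <= n)%nat -> d (w m) (w n) < e.

Lemma cauchy_conv w : cauchy w -> exists z, conv d w z.
Proof.
  intros Hw. destruct (seqcomp d Hd Hc w) as [psi [Hpsi [z Hz]]]. exists z.
  intros e He. destruct (Hw (e/2)) as [N1 HN1]; [lra|].
  destruct (Hz (e/2)) as [N2 HN2]; [lra|]. exists N1. intros n Hn.
  pose proof (sincr_ge _ Hpsi (Nat.max N1 N2)).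
  specialize (HN1 n (psi (Nat.max N1 N2)) Hn ltac:(lia)).
  specialize (HN2 (Nat.max N1 N2) ltac:(lia)). simpl in HN2.
  pose proof (d_tri d Hd (w n) (w (psi (Nat.max N1 N2))) z). lra.
Qed.

Lemma lim_le v w z z' a : conv d v z -> conv d w z' ->
  (forall e, 0 < e -> exists N, forall n, (N <= n)%nat -> d (v n) (w n) <= a + e) ->
  d z z' <= a.
Proof.
  intros Hv Hw H. apply Rnot_lt_le; intro Hlt.
  set (e := (d z z' - a) / 4).
  destruct (Hv e) as [N1 H1]; [unfold e; lra|].
  destruct (Hw e) as [N2 H2]; [unfold e; lra|].
  destruct (H e) as [N3 H3]; [unfold e; lra|].
  set (n := (N1 + N2 + N3)%nat).
  specialize (H1 n ltac:(unfold n; lia)). specialize (H2 n ltac:(unfold n; lia)).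
  specialize (H3 n ltac:(unfold n; lia)).
  pose proof (d_tri d Hd z (v n) z') as T1. pose proof (d_tri d Hd (v n) (w n) z') as T2.
  rewrite (d_sym d Hd z (v n)) in T1. unfold e in *. lra.
Qed.

Lemma AA (f : nat -> R -> X) (Om : R -> R -> R) (K : R) (e : nat -> R) :
  0 <= K ->
  (forall eps, 0 < eps -> exists N, forall n, (N <= n)%nat -> e n < eps) ->
  (forall n s t, 0 <= s <= 1 -> 0 <= t <= 1 -> d (f n s) (f n t) <= Om s t + e n) ->
  (forall s t, 0 <= s <= 1 -> 0 <= t <= 1 -> Om s t <= K * Rabs (s - t)) ->
  exists phi g, sincr phi /\ forall t, 0 <= t <= 1 -> conv d (fun n => f (phi n) t) (g t).
Proof.
  intros HK He Hf HOm.
  destruct (diag d Hd Hc (fun n j => f n (rj j))) as [phi [Hphi Hconv]].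
  assert (Hcs : forall t, 0 <= t <= 1 -> cauchy (fun n => f (phi n) t)).
  { intros t Ht eps Heps.
    destruct (inv_small (eps / (8 * (K + 1)))) as [b Hb].
    { apply Rdiv_lt_0_compat; lra. }
    specialize (Hb b (le_n _)).
    destruct (rj_dense t b Ht) as [j Hj].
    destruct (Hconv j) as [zj Hzj].
    destruct (Hzj (eps / 8)) as [N1 HN1]; [lra|].
    destruct (He (eps / 8)) as [N2 HN2]; [lra|].
    assert (HKr : K * Rabs (t - rj j) < eps / 8).
    { assert (K * Rabs (t - rj j) <= (K + 1) * / INR (S b)).
      { apply Rmult_le_compat; try lra; apply Rabs_pos. }
      assert ((K + 1) * / INR (S b) < (K + 1) * (eps / (8 * (K + 1)))).
      { apply Rmult_lt_compat_l; lra. }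
      replace ((K + 1) * (eps / (8 * (K + 1)))) with (eps / 8) in H0 by (field; lra). lra. }
    assert (Hpt : forall n, (Nat.max N1 N2 <= n)%nat ->
               d (f (phi n) t) zj < 3 * eps / 8).
    { intros n Hn. pose proof (sincr_ge _ Hphi n).
      specialize (HN1 n ltac:(lia)). specialize (HN2 (phi n) ltac:(lia)).
      pose proof (Hf (phi n) t (rj j) Ht (rj_range j)).
      pose proof (HOm t (rj j) Ht (rj_range j)).
      pose proof (d_tri d Hd (f (phi n) t) (f (phi n) (rj j)) zj). simpl in HN1. lra. }
    exists (Nat.max N1 N2). intros m n Hm Hn.
    pose proof (Hpt m Hm). pose proof (Hpt n Hn).
    pose proof (d_tri d Hd (f (phi m) t) zj (f (phi n) t)).
    rewrite (d_sym d Hd zj) in H1. lra. }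
  assert (inh : inhabited X) by exact (inhabits (f 0%nat 0)).
  exists phi, (fun t => epsilon inh (fun z => conv d (fun n => f (phi n) t) z)).
  split; auto. intros t Ht. apply epsilon_spec. apply cauchy_conv. auto.
Qed.

End AA.

Section Len.
Context {X : Type} (d : X -> X -> R) (Hd : is_metric d).

Lemma psum_le_len p L t n : plength d p = Finite L -> is_partition t n ->
  psum (fun i => d (p (t i)) (p (t (S i)))) n <= L.
Proof.
  intros HL Ht. unfold plength in HL.
  destruct (Lub_Rbar_correct (fun s => exists t n, is_partition t n /\
                       s = psum (fun i => d (p (t i)) (p (t (S i)))) n)) as [Hub _].
  rewrite HL in Hub. apply (Hub _). exists t, n; auto.
Qed.

Definition tpart (i : nat) : R := match i with O => 0 | _ => 1 end.
Lemma tpart_ok : is_partition tpart 1.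
Proof. split; [reflexivity|split; [reflexivity|]]. intros i Hi. assert (i = O) by lia. subst. simpl. lra. Qed.

Lemma len_ge_d p L : plength d p = Finite L -> d (p 0) (p 1) <= L.
Proof.
  intros HL. pose proof (psum_le_len p L tpart 1 HL tpart_ok). simpl in H. lra.
Qed.

Lemma part_mono t n : is_partition t n -> forall i j, (i <= j <= n)%nat -> t i <= t j.
Proof.
  intros [_ [_ H]] i j [Hij Hjn]. induction Hij; [lra|].
  specialize (H m ltac:(lia)). specialize (IHHij ltac:(lia)). lra.
Qed.

Lemma ctrl_len (c : R -> X) (Phi : R -> R) :
  (forall u v, 0 <= u -> u <= v -> v <= 1 -> d (c u) (c v) <= Phi v - Phi u) ->
  exists L, plength d c = Finite L /\ L <= Phi 1 - Phi 0.
Proof.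
  intros Hc. unfold plength.
  assert (Hb : forall s, (exists t n, is_partition t n /\
        s = psum (fun i => d (c (t i)) (c (t (S i)))) n) -> s <= Phi 1 - Phi 0).
  { intros s [t [n [Ht ->]]].
    assert (Hk : forall k, (k <= n)%nat ->
       psum (fun i => d (c (t i)) (c (t (S i)))) k <= Phi (t k) - Phi (t O)).
    { induction k; intros Hk; simpl; [lra|].
      specialize (IHk ltac:(lia)).
      pose proof (part_mono t n Ht O k ltac:(lia)) as M1.
      pose proof (part_mono t n Ht k (S k) ltac:(lia)) as M2.
      pose proof (part_mono t n Ht (S k) n ltac:(lia)) as M3.
      destruct Ht as [E0 [E1 _]]. rewrite E0 in *. rewrite E1 in *.
      specialize (Hc (t k) (t (S k)) M1 M2 M3). lra. }
    specialize (Hk n (le_n _)). destruct Ht as [H0 [H1 _]]. rewrite H0, H1 in Hk. exact Hk. }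
  assert (HE : exists t n, is_partition t n /\
        psum (fun i => d (c (tpart i)) (c (tpart (S i)))) 1 = psum (fun i => d (c (t i)) (c (t (S i)))) n).
  { exists tpart, 1%nat; split; auto; apply tpart_ok. }
  destruct (lub_fin _ (Phi 1 - Phi 0) _ HE Hb) as [l [El [Hl _]]].
  exists l; auto.
Qed.

Lemma dr_le_ctrl (c : R -> X) a b (Phi : R -> R) K :
  c 0 = a -> c 1 = b -> 0 <= K ->
  (forall u v, 0 <= u -> u <= v -> v <= 1 -> d (c u) (c v) <= Phi v - Phi u) ->
  (forall u v, 0 <= u -> u <= v -> v <= 1 -> Phi v - Phi u <= K * (v - u)) ->
  d_r d a b <= Phi 1 - Phi 0.
Proof.
  intros Ha Hb HK Hc HPhi.
  destruct (ctrl_len c Phi Hc) as [L [HL HL1]].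
  assert (Hp : is_path d c a b).
  { split; [auto|split; [auto|]]. intros t Ht eps Heps.
    exists (eps / (K + 1)). split; [apply Rdiv_lt_0_compat; lra|].
    intros s Hs Hst.
    assert (Hk : K * Rabs (s - t) < eps).
    { assert (Hq : (K+1) * Rabs (s-t) < (K+1) * (eps/(K+1))) by (apply Rmult_lt_compat_l; lra).
      replace ((K+1)*(eps/(K+1))) with eps in Hq by (field; lra).
      pose proof (Rabs_pos (s - t)); nra. }
    destruct (Rle_dec s t) as [Hle|Hle].
    - eapply Rle_lt_trans; [apply Hc; lra|].
      eapply Rle_lt_trans; [apply HPhi; lra|]. rewrite Rabs_left1 in Hk by lra. nra.
    - rewrite (d_sym d Hd). eapply Rle_lt_trans; [apply Hc; lra|].
      eapply Rle_lt_trans; [apply HPhi; lra|]. rewrite Rabs_right in Hk by lra. nra. }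
  unfold d_r, d_r_bar.
  destruct (glb_fin (fun L => exists p, is_path d p a b /\ plength d p = Finite L) 0 L)
    as [g [Eg [_ [Hg _]]]].
  - exists c; auto.
  - intros x [p [_ Hp']]. pose proof (len_ge_d p x Hp'). pose proof (d_pos d Hd (p 0) (p 1)). lra.
  - rewrite Eg. simpl. assert (g <= L) by (apply Hg; exists c; auto). lra.
Qed.

Lemma dr_props (Hrc : rect_path_connected d) x y :
  d x y <= d_r d x y /\ forall e, 0 < e -> exists p L, is_path d p x y /\
     plength d p = Finite L /\ L < d_r d x y + e.
Proof.
  destruct (Hrc x y) as [p0 [Hp0 Hr0]].
  unfold rectifiable, is_finite in Hr0.
  destruct (glb_fin (fun L => exists p, is_path d p x y /\ plength d p = Finite L) (d x y)
     (real (plength d p0))) as [g [Eg [Hg0 [_ Hg]]]].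
  - exists p0; split; auto.
  - intros L [p [Hp HL]]. destruct Hp as [H0 [H1 _]]. pose proof (len_ge_d p L HL).
    rewrite H0, H1 in H. auto.
  - unfold d_r, d_r_bar. rewrite Eg. simpl. split; auto.
    intros e He. destruct (Hg e He) as [L [[p [Hp HL]] HLt]]. exists p, L; auto.
Qed.

Section Chain.
Variables (p : R -> X) (x y : X) (L h : R).
Hypothesis (Hp : is_path d p x y) (HL : plength d p = Finite L) (Hh : 0 < h).

Definition Sset (t s : R) := t <= s <= 1 /\ forall u, t <= u <= s -> d (p t) (p u) <= h.
Definition nxt (t : R) := real (Lub_Rbar (Sset t)).

Lemma pcont : forall t, 0 <= t <= 1 -> forall eps, 0 < eps -> exists delta, 0 < delta /\
      forall s, 0 <= s <= 1 -> Rabs (s - t) < delta -> d (p s) (p t) < eps.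
Proof. destruct Hp as [_ [_ H]]; exact H. Qed.

Lemma nxt_spec t : 0 <= t <= 1 ->
  t <= nxt t <= 1 /\ (forall u, t <= u < nxt t -> d (p t) (p u) <= h) /\
  (forall s, Sset t s -> s <= nxt t).
Proof.
  intros Ht. unfold nxt.
  destruct (lub_fin (Sset t) 1 t) as [l [El [Hl1 Hl2]]].
  - split; [lra|]. intros u Hu. replace u with t by lra. rewrite (d_refl d Hd). lra.
  - intros s [Hs _]; lra.
  - rewrite El. simpl.
    destruct (Lub_Rbar_correct (Sset t)) as [_ Hleast].
    split; [split; [apply Hl2; split; [lra|]; intros u Hu; replace u with t by lra;
       rewrite (d_refl d Hd); lra| auto]|]. split; auto.
    intros u Hu. apply NNPP; intro Hn.
    assert (Hub : Rbar_le (Lub_Rbar (Sset t)) (Finite u)).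
    { apply Hleast. intros s Hs. simpl. apply Rnot_lt_le. intro Hsu. apply Hn.
      destruct Hs as [_ Hs]. apply Hs. lra. }
    rewrite El in Hub. simpl in Hub. lra.
Qed.

Lemma nxt_le t : 0 <= t <= 1 -> d (p t) (p (nxt t)) <= h.
Proof.
  intros Ht. destruct (nxt_spec t Ht) as [[H1 H2] [H3 _]].
  destruct (Req_dec t (nxt t)) as [E|E].
  { rewrite <- E, (d_refl d Hd). lra. }
  apply Rnot_lt_le; intro Hc.
  destruct (pcont (nxt t) ltac:(lra) (d (p t) (p (nxt t)) - h)) as [del [Hdel Hc2]]; [lra|].
  set (u := Rmax t (nxt t - del / 2)).
  assert (Hu : t <= u < nxt t) by (unfold u; unfold Rmax; destruct Rle_dec; lra).
  specialize (H3 u Hu).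
  specialize (Hc2 u ltac:(lra)).
  assert (Rabs (u - nxt t) < del) by (unfold u, Rmax in *; destruct Rle_dec;
     rewrite Rabs_left1; lra).
  specialize (Hc2 H).
  pose proof (d_tri d Hd (p t) (p u) (p (nxt t))). lra.
Qed.

Lemma nxt_far t : 0 <= t <= 1 -> nxt t < 1 -> h <= d (p t) (p (nxt t)).
Proof.
  intros Ht Hn. destruct (nxt_spec t Ht) as [[H1 H2] [H3 H4]].
  apply Rnot_lt_le; intro Hc.
  destruct (pcont (nxt t) ltac:(lra) (h - d (p t) (p (nxt t)))) as [del [Hdel Hc2]]; [lra|].
  set (s := Rmin 1 (nxt t + del / 2)).
  assert (Hs : Sset t s).
  { unfold s, Rmin; split; [destruct Rle_dec; lra|].
    intros u Hu. destruct (Rlt_dec u (nxt t)) as [Hlt|Hge]; [apply H3; lra|].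
    assert (Rabs (u - nxt t) < del).
    { unfold s, Rmin in Hu; destruct Rle_dec in Hu; rewrite Rabs_right; lra. }
    specialize (Hc2 u ltac:(unfold s, Rmin in Hu; destruct Rle_dec in Hu; lra) H).
    pose proof (d_tri d Hd (p t) (p (nxt t)) (p u)). rewrite (d_sym d Hd (p (nxt t))) in H0. lra. }
  specialize (H4 s Hs). unfold s, Rmin in H4; destruct Rle_dec in H4; lra.
Qed.

Lemma nxt_gt t : 0 <= t < 1 -> t < nxt t.
Proof.
  intros Ht. destruct (nxt_spec t ltac:(lra)) as [_ [_ H4]].
  destruct (pcont t ltac:(lra) h Hh) as [del [Hdel Hc2]].
  set (s := Rmin 1 (t + del / 2)).
  assert (Hs : Sset t s).
  { unfold s, Rmin; split; [destruct Rle_dec; lra|].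
    intros u Hu. rewrite (d_sym d Hd). left. apply Hc2.
    - unfold s, Rmin in Hu; destruct Rle_dec in Hu; lra.
    - unfold s, Rmin in Hu; destruct Rle_dec in Hu; rewrite Rabs_right; lra. }
  specialize (H4 s Hs). unfold s, Rmin in H4; destruct Rle_dec in H4; lra.
Qed.

Fixpoint T (i : nat) : R := match i with O => 0 | S k => nxt (T k) end.

Lemma T_range i : 0 <= T i <= 1.
Proof. induction i; simpl; [lra|]. destruct (nxt_spec _ IHi) as [[H1 H2] _]. lra. Qed.

Lemma T_step i : T i <= T (S i).
Proof. simpl. destruct (nxt_spec _ (T_range i)) as [[H1 H2] _]. lra. Qed.

Lemma T_mono i j : (i <= j)%nat -> T i <= T j.
Proof. intros H; induction H; [lra|]. pose proof (T_step m); lra. Qed.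

Lemma T_count m : T m < 1 -> INR m * h <= L.
Proof.
  intros Hm.
  set (t' := fun i => if Nat.leb i m then T i else 1).
  assert (Hpart : is_partition t' (S m)).
  { split; [reflexivity|]. split.
    { unfold t'. rewrite (proj2 (Nat.leb_gt (S m) m) ltac:(lia)). reflexivity. }
    intros i Hi. unfold t'. destruct (Nat.leb_spec i m); [|lia].
    destruct (Nat.leb_spec (S i) m).
    - apply nxt_gt. pose proof (T_range i). pose proof (T_mono i m ltac:(lia)). lra.
    - assert (i = m) by lia. subst. lra. }
  pose proof (psum_le_len p L t' (S m) HL Hpart) as Hs.
  assert (Hk : forall k, (k <= m)%nat -> INR k * h <= psum (fun i => d (p (t' i)) (p (t' (S i)))) k).
  { induction k; intros Hk; cbn [psum]; [simpl; lra|]. specialize (IHk ltac:(lia)).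
    rewrite S_INR. unfold t' at 3 4.
    rewrite (proj2 (Nat.leb_le k m) ltac:(lia)), (proj2 (Nat.leb_le (S k) m) ltac:(lia)).
    cbn [T]. pose proof (nxt_far (T k) (T_range k)).
    assert (nxt (T k) < 1) by (pose proof (T_mono (S k) m ltac:(lia)); simpl in H0; lra).
    specialize (H H0). lra. }
  specialize (Hk m (le_n _)). simpl in Hs. pose proof (d_pos d Hd (p (t' m)) (p (t' (S m)))). lra.
Qed.

Lemma chain : exists m (z : nat -> X), z O = x /\ z m = y /\
  (forall i, (i < m)%nat -> d (z i) (z (S i)) <= h) /\ INR m * h <= L + h.
Proof.
  assert (HL0 : 0 <= L).
  { pose proof (len_ge_d p L HL). pose proof (d_pos d Hd (p 0) (p 1)). lra. }
  set (m := S (fl (L / h))).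
  assert (H0 : 0 <= L / h) by (apply Rdiv_le_0_compat; lra).
  destruct (fl_spec _ H0) as [F1 F2].
  assert (Hm1 : T m = 1).
  { destruct (T_range m) as [_ [Hlt|Heq]]; auto.
    pose proof (T_count m Hlt). unfold m in H. rewrite S_INR in H.
    assert (L / h * h = L) by (field; lra).
    assert (L / h * h < (INR (fl (L / h)) + 1) * h) by (apply Rmult_lt_compat_r; lra). lra. }
  destruct Hp as [Hx [Hy _]].
  exists m, (fun i => p (T i)). split; [simpl; auto|]. split; [rewrite Hm1; auto|]. split.
  - intros i Hi. simpl. apply nxt_le, T_range.
  - unfold m. rewrite S_INR.
    assert (INR (fl (L / h)) * h <= L / h * h) by (apply Rmult_le_compat_r; lra).
    assert (L / h * h = L) by (field; lra). lra.
Qed.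
End Chain.

Lemma chain_tri (z : nat -> X) m h : 0 <= h -> (forall i, (i < m)%nat -> d (z i) (z (S i)) <= h) ->
  forall i j, (i <= m)%nat -> (j <= m)%nat -> d (z i) (z j) <= h * Rabs (INR i - INR j).
Proof.
  intros Hh Hz.
  assert (Hij : forall i j, (i <= j)%nat -> (j <= m)%nat -> d (z i) (z j) <= h * (INR j - INR i)).
  { intros i j Hij Hj. induction Hij.
    - rewrite (d_refl d Hd). lra.
    - specialize (IHHij ltac:(lia)). specialize (Hz m0 ltac:(lia)).
      pose proof (d_tri d Hd (z i) (z m0) (z (S m0))). rewrite S_INR. lra. }
  intros i j Hi Hj. destruct (Nat.le_ge_cases i j) as [H|H].
  - specialize (Hij i j H Hj). apply le_INR in H. rewrite Rabs_left1 by lra. lra.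
  - specialize (Hij j i H Hi). apply le_INR in H. rewrite (d_sym d Hd). rewrite Rabs_right by lra. lra.
Qed.

End Len.

Section Geo.
Context {X : Type} (d : X -> X -> R) (Hd : is_metric d) (Hc : d_compact d (fun _ => True))
  (Hrc : rect_path_connected d).

Lemma conv_const_eq (v : nat -> X) a z : (forall n, v n = a) -> conv d v z -> z = a.
Proof.
  intros Hv H. apply (conv_unique d Hd v); auto.
  intros e He. exists O. intros n _. rewrite Hv, (d_refl d Hd). auto.
Qed.

Lemma geodesic x y : exists q : R -> X, q 0 = x /\ q 1 = y /\
  forall s t, 0 <= s <= 1 -> 0 <= t <= 1 -> d (q s) (q t) <= d_r d x y * Rabs (s - t).
Proof.
  destruct (dr_props d Hrc x y) as [Hdxy Happ].
  set (D := d_r d x y) in *.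
  assert (HD : 0 <= D) by (pose proof (d_pos d Hd x y); lra).
  set (P := fun (n : nat) (mz : nat * (nat -> X)) =>
     snd mz O = x /\ snd mz (fst mz) = y /\
     (forall i, (i < fst mz)%nat -> d (snd mz i) (snd mz (S i)) <= / INR (S n)) /\
     INR (fst mz) * / INR (S n) <= D + 2 * / INR (S n)).
  assert (HP : forall n, exists mz, P n mz).
  { intro n. assert (Hh : 0 < / INR (S n)) by (apply Rinv_0_lt_compat, lt_0_INR; lia).
    destruct (Happ _ Hh) as [p [L [Hp [HL HLt]]]].
    destruct (chain d Hd p x y L (/ INR (S n)) Hp HL Hh) as [m [z [H1 [H2 [H3 H4]]]]].
    exists (m, z). unfold P; cbn [fst snd]. repeat split; auto. lra. }
  set (ch := fun n => epsilon (inhabits (O, fun _ : nat => x)) (P n)).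
  assert (Hch : forall n, P n (ch n)) by (intro n; apply epsilon_spec, HP).
  set (f := fun n t => snd (ch n) (idx (fst (ch n)) t)).
  assert (Hf : forall n s t, 0 <= s <= 1 -> 0 <= t <= 1 ->
     d (f n s) (f n t) <= D * Rabs (s - t) + 3 * / INR (S n)).
  { intros n s t Hs Ht. destruct (Hch n) as [H1 [H2 [H3 H4]]].
    set (m := fst (ch n)) in *. set (z := snd (ch n)) in *. set (h := / INR (S n)) in *.
    assert (Hh : 0 < h) by (apply Rinv_0_lt_compat, lt_0_INR; lia).
    unfold f. fold m z.
    destruct (idx_spec m s Hs) as [Is _]. destruct (idx_spec m t Ht) as [It _].
    pose proof (chain_tri d Hd z m h ltac:(lra) H3 _ _ Is It) as Hz.
    pose proof (idx_diff m s t Hs Ht) as Hi.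
    assert (Hst : Rabs (s - t) <= 1) by (unfold Rabs; destruct Rcase_abs; lra).
    pose proof (Rabs_pos (s - t)).
    assert (h * Rabs (INR (idx m s) - INR (idx m t)) <= h * (INR m * Rabs (s - t) + 1))
      by (apply Rmult_le_compat_l; lra).
    assert (h * INR m * Rabs (s - t) <= (D + 2 * h) * Rabs (s - t))
      by (apply Rmult_le_compat_r; lra).
    nra. }
  destruct (AA d Hd Hc f (fun s t => D * Rabs (s - t)) D (fun n => 3 * / INR (S n)) HD)
    as [phi [q [Hphi Hq]]].
  { intros eps Heps. destruct (inv_small (eps / 3)) as [N HN]; [lra|].
    exists N. intros n Hn. specialize (HN n Hn). lra. }
  { exact Hf. }
  { intros; lra. }
  exists q. split; [|split].
  - apply (conv_const_eq (fun n => f (phi n) 0)); [|apply Hq; lra].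
    intro n. unfold f. rewrite idx_0. apply (Hch (phi n)).
  - apply (conv_const_eq (fun n => f (phi n) 1)); [|apply Hq; lra].
    intro n. unfold f. rewrite idx_1. apply (Hch (phi n)).
  - intros s t Hs Ht. apply (lim_le d Hd _ _ _ _ _ (Hq s Hs) (Hq t Ht)).
    intros eps Heps. destruct (inv_small (eps / 3)) as [N HN]; [lra|].
    exists N. intros n Hn. pose proof (sincr_ge _ Hphi n).
    specialize (HN (phi n) ltac:(lia)). specialize (Hf (phi n) s t Hs Ht). lra.
Qed.
End Geo.

Lemma baire (E : nat -> R -> Prop) :
  (forall t, 0 <= t <= 1 -> exists k, E k t) ->
  (forall k t, 0 <= t <= 1 -> (forall e, 0 < e -> exists t', E k t' /\ Rabs (t' - t) < e) -> E k t) ->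
  exists k a b, 0 <= a /\ a < b /\ b <= 1 /\ forall u, a <= u <= b -> E k u.
Proof.
  intros Hcov Hcl. apply NNPP; intro Hn.
  assert (Hstep : forall k a b, 0 <= a /\ a < b /\ b <= 1 -> exists cd : R * R,
     a <= fst cd < snd cd /\ snd cd <= b /\ forall t, fst cd <= t <= snd cd -> ~ E k t).
  { intros k a b Hab.
    assert (Hu : exists u, a + (b - a) / 3 <= u <= b - (b - a) / 3 /\ ~ E k u).
    { apply NNPP; intro Hu. apply Hn. exists k, (a + (b - a) / 3), (b - (b - a) / 3).
      split; [lra|split; [lra|split; [lra|]]]. intros u Hu'. apply NNPP; intro Hnu. apply Hu. exists u; auto. }
    destruct Hu as [u [Hu1 Hu2]].
    assert (He : exists e, 0 < e /\ forall t', Rabs (t' - u) < e -> ~ E k t').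
    { apply NNPP; intro He. apply Hu2. apply Hcl; [lra|]. intros e He0.
      apply NNPP; intro Hx. apply He. exists e; split; auto. intros t' Ht' Hk.
      apply Hx. exists t'; auto. }
    destruct He as [e [He1 He2]].
    set (rho := Rmin (e / 2) ((b - a) / 6)).
    assert (Hr : 0 < rho /\ rho <= e / 2 /\ rho <= (b - a) / 6).
    { unfold rho, Rmin; destruct Rle_dec; lra. }
    exists (u - rho, u + rho). simpl. split; [lra|]. split; [lra|].
    intros t Ht. apply He2. unfold Rabs; destruct Rcase_abs; lra. }
  set (nI := fun k (ab : R * R) => epsilon (inhabits (0, 1))
     (fun cd : R * R => fst ab <= fst cd < snd cd /\ snd cd <= snd ab /\
        forall t, fst cd <= t <= snd cd -> ~ E k t)).
  set (I := fix I k := match k with O => (0, 1) | S j => nI j (I j) end).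
  assert (HI : forall k, 0 <= fst (I k) < snd (I k) /\ snd (I k) <= 1 /\
     fst (I k) <= fst (I (S k)) < snd (I (S k)) /\ snd (I (S k)) <= snd (I k) /\
     forall t, fst (I (S k)) <= t <= snd (I (S k)) -> ~ E k t).
  { induction k.
    - simpl. assert (H01 : 0 <= 0 /\ 0 < 1 /\ 1 <= 1) by lra.
      pose proof (epsilon_spec (inhabits (0, 1)) _ (Hstep O 0 1 H01)). simpl in H. 
      split; [lra|]. split; [lra|]. exact H.
    - destruct IHk as [H1 [H2 [H3 [H4 H5]]]].
      assert (Hs : 0 <= fst (I (S k)) /\ fst (I (S k)) < snd (I (S k)) /\ snd (I (S k)) <= 1) by lra.
      pose proof (epsilon_spec (inhabits (0, 1)) _ (Hstep (S k) _ _ Hs)).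
      split; [lra|]. split; [lra|]. change (I (S (S k))) with (nI (S k) (I (S k))).
      exact H. }
  assert (Hmono : forall j k, (j <= k)%nat -> fst (I j) <= fst (I k) /\ snd (I k) <= snd (I j)).
  { intros j k Hjk. induction Hjk; [lra|]. destruct (HI m) as [_ [_ [H3 [H4 _]]]]. lra. }
  destruct (lub_fin (fun s => exists k, s = fst (I k)) 1 0) as [ts [Ets [Hts1 Hts2]]].
  { exists O; reflexivity. }
  { intros s [k ->]. destruct (HI k); lra. }
  assert (Hin : forall k, fst (I k) <= ts <= snd (I k)).
  { intro k. split; [apply Hts2; exists k; auto|].
    destruct (Lub_Rbar_correct (fun s => exists k, s = fst (I k))) as [_ Hl].
    assert (Hb : Rbar_le (Lub_Rbar (fun s => exists k, s = fst (I k))) (Finite (snd (I k)))).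
    { apply Hl. intros s [j ->]. simpl. destruct (Nat.le_ge_cases j k) as [H|H].
      - pose proof (Hmono j k H). destruct (HI k). lra.
      - pose proof (Hmono k j H). destruct (HI j). lra. }
    rewrite Ets in Hb. exact Hb. }
  destruct (Hcov ts) as [k Hk].
  { pose proof (Hin O). simpl in H. lra. }
  destruct (HI k) as [_ [_ [_ [_ H5]]]]. apply (H5 ts); auto.
Qed.

Section Sel.
Context {X : Type} (d : X -> X -> R) (Hd : is_metric d) (Hc : d_compact d (fun _ => True)).

Lemma ti_spec N t : (0 < N)%nat -> 0 <= t <= 1 ->
  Rabs (INR (idx N t) / INR N - t) <= / INR N.
Proof.
  intros HN Ht. destruct (idx_spec N t Ht) as [_ [H1 H2]].
  assert (HNp : 0 < INR N) by (apply lt_0_INR; lia).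
  assert (E : INR (idx N t) / INR N - t = (INR (idx N t) - t * INR N) / INR N) by (field; lra).
  rewrite E. unfold Rdiv. rewrite Rabs_mult, (Rabs_right (/ INR N)).
  2:{ left; apply Rinv_0_lt_compat; auto. }
  rewrite <- (Rmult_1_l (/ INR N)) at 2. apply Rmult_le_compat_r; [left; apply Rinv_0_lt_compat; auto|].
  unfold Rabs; destruct Rcase_abs; lra.
Qed.

Lemma selection (G : R -> X -> Prop) (Phi : R -> R) (D : R) (a0 : X) :
  0 <= D -> d_compact d (G 1) ->
  (forall u v, 0 <= u -> u <= v -> v <= 1 -> Hle d (G u) (G v) (Phi v - Phi u)) ->
  (forall u v, u <= v -> 0 <= Phi v - Phi u <= D * (v - u)) ->
  G 0 a0 -> exists b, G 1 b /\ d_r d a0 b <= Phi 1 - Phi 0.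
Proof.
  intros HD HG1 HH HPhi Ha0.
  assert (HPa : forall u v, Rabs (Phi v - Phi u) <= D * Rabs (v - u)).
  { intros u v. destruct (Rle_dec u v) as [H|H].
    - specialize (HPhi u v H). rewrite !Rabs_right by lra. lra.
    - specialize (HPhi v u ltac:(lra)). rewrite Rabs_left1, Rabs_left1 by lra. lra. }
  assert (inh : inhabited X) by exact (inhabits a0).
  set (ti := fun (N i : nat) => INR i / INR N).
  set (zs := fun N => fix zs (i : nat) : X := match i with O => a0 | S j =>
     epsilon inh (fun w => G (ti N (S j)) w /\
        d (zs j) w < Phi (ti N (S j)) - Phi (ti N j) + / (INR N * INR N)) end).
  assert (Hti : forall N i, (0 < N)%nat -> (i <= N)%nat -> 0 <= ti N i <= 1).
  { intros N i HN Hi. unfold ti. assert (0 < INR N) by (apply lt_0_INR; lia).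
    apply le_INR in Hi. split; [apply Rdiv_le_0_compat; [apply pos_INR|lra]|].
    apply (Rmult_le_reg_r (INR N)); auto. unfold Rdiv. rewrite Rmult_assoc, Rinv_l; lra. }
  assert (Htis : forall N i, (0 < N)%nat -> ti N i <= ti N (S i)).
  { intros N i HN. unfold ti. assert (0 < INR N) by (apply lt_0_INR; lia).
    rewrite S_INR. unfold Rdiv. apply Rmult_le_compat_r; [left; apply Rinv_0_lt_compat; auto|lra]. }
  assert (Hz : forall N i, (0 < N)%nat -> (i <= N)%nat -> G (ti N i) (zs N i)).
  { intros N i HN Hi. induction i.
    - change (zs N 0%nat) with a0.
      assert (E0 : ti N 0%nat = 0) by (unfold ti; simpl; unfold Rdiv; ring). rewrite E0. exact Ha0.
    - specialize (IHi ltac:(lia)). change (zs N (S i)) with (epsilon inh (fun w => G (ti N (S i)) w /\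
        d (zs N i) w < Phi (ti N (S i)) - Phi (ti N i) + / (INR N * INR N))).
      assert (Hex : exists w, G (ti N (S i)) w /\
        d (zs N i) w < Phi (ti N (S i)) - Phi (ti N i) + / (INR N * INR N)).
      { destruct (HH (ti N i) (ti N (S i))) as [H1 _].
        - apply (Hti N i HN); lia.
        - apply Htis; auto.
        - apply (Hti N (S i) HN); lia.
        - apply H1; auto. assert (0 < INR N) by (apply lt_0_INR; lia).
          apply Rinv_0_lt_compat; nra. }
      apply (epsilon_spec inh _ Hex). }
  assert (Hstep : forall N j, (0 < N)%nat -> (j < N)%nat ->
     d (zs N j) (zs N (S j)) < Phi (ti N (S j)) - Phi (ti N j) + / (INR N * INR N)).
  { intros N i HN Hi. change (zs N (S i)) with (epsilon inh (fun w => G (ti N (S i)) w /\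
        d (zs N i) w < Phi (ti N (S i)) - Phi (ti N i) + / (INR N * INR N))).
      assert (Hex : exists w, G (ti N (S i)) w /\
        d (zs N i) w < Phi (ti N (S i)) - Phi (ti N i) + / (INR N * INR N)).
      { destruct (HH (ti N i) (ti N (S i))) as [H1 _].
        - apply (Hti N i HN); lia.
        - apply Htis; auto.
        - apply (Hti N (S i) HN); lia.
        - apply H1; [apply Hz; auto; lia|]. assert (0 < INR N) by (apply lt_0_INR; lia).
          apply Rinv_0_lt_compat; nra. }
      apply (epsilon_spec inh _ Hex). }
  assert (Hacc : forall N i j, (0 < N)%nat -> (i <= j)%nat -> (j <= N)%nat ->
     d (zs N i) (zs N j) <= Phi (ti N j) - Phi (ti N i) + INR j * / (INR N * INR N)).
  { intros N i j HN Hij Hj. assert (0 < / (INR N * INR N)).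
    { assert (0 < INR N) by (apply lt_0_INR; lia). apply Rinv_0_lt_compat; nra. }
    induction Hij.
    - rewrite (d_refl d Hd). pose proof (pos_INR i). nra.
    - specialize (IHHij ltac:(lia)). specialize (Hstep N m HN ltac:(lia)).
      pose proof (d_tri d Hd (zs N i) (zs N m) (zs N (S m))). rewrite S_INR. nra. }
  assert (Hacc2 : forall N i j, (0 < N)%nat -> (i <= N)%nat -> (j <= N)%nat ->
     d (zs N i) (zs N j) <= Rabs (Phi (ti N j) - Phi (ti N i)) + / INR N).
  { intros N i j HN Hi Hj. assert (HNp : 0 < INR N) by (apply lt_0_INR; lia).
    assert (Hk : forall k, (k <= N)%nat -> INR k * / (INR N * INR N) <= / INR N).
    { intros k Hk. apply le_INR in Hk. rewrite Rinv_mult.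
      assert (0 < / INR N) by (apply Rinv_0_lt_compat; auto).
      replace (/ INR N) with (INR N * / INR N * / INR N) at 3 by (field; lra).
      rewrite <- Rmult_assoc. apply Rmult_le_compat_r; [lra|].
      apply Rmult_le_compat_r; lra. }
    destruct (Nat.le_ge_cases i j) as [H|H].
    - pose proof (Hacc N i j HN H Hj). pose proof (Hk j Hj).
      pose proof (Rle_abs (Phi (ti N j) - Phi (ti N i))). lra.
    - pose proof (Hacc N j i HN H Hi). pose proof (Hk i Hi). rewrite (d_sym d Hd).
      rewrite Rabs_minus_sym. pose proof (Rle_abs (Phi (ti N i) - Phi (ti N j))). lra. }
  set (f := fun n t => zs (S n) (idx (S n) t)).
  assert (Hf : forall n s t, 0 <= s <= 1 -> 0 <= t <= 1 ->
     d (f n s) (f n t) <= Rabs (Phi t - Phi s) + (2 * D + 1) * / INR (S n)).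
  { intros n s t Hs Ht. unfold f.
    destruct (idx_spec (S n) s Hs) as [Is _]. destruct (idx_spec (S n) t Ht) as [It _].
    pose proof (Hacc2 (S n) _ _ ltac:(lia) Is It) as H1.
    pose proof (ti_spec (S n) s ltac:(lia) Hs) as Ts.
    pose proof (ti_spec (S n) t ltac:(lia) Ht) as Tt.
    fold (ti (S n) (idx (S n) s)) in Ts. fold (ti (S n) (idx (S n) t)) in Tt.
    pose proof (HPa t (ti (S n) (idx (S n) t))) as P1.
    pose proof (HPa s (ti (S n) (idx (S n) s))) as P2.
    pose proof (Rabs_triang (Phi (ti (S n) (idx (S n) t)) - Phi t) (Phi t - Phi (ti (S n) (idx (S n) s)))) as R1.
    pose proof (Rabs_triang (Phi t - Phi s) (Phi s - Phi (ti (S n) (idx (S n) s)))) as R2.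
    replace (Phi (ti (S n) (idx (S n) t)) - Phi t + (Phi t - Phi (ti (S n) (idx (S n) s))))
      with (Phi (ti (S n) (idx (S n) t)) - Phi (ti (S n) (idx (S n) s))) in R1 by ring.
    replace (Phi t - Phi s + (Phi s - Phi (ti (S n) (idx (S n) s))))
      with (Phi t - Phi (ti (S n) (idx (S n) s))) in R2 by ring.
    rewrite Rabs_minus_sym in P2.
    assert (D * Rabs (ti (S n) (idx (S n) t) - t) <= D * / INR (S n)) by (apply Rmult_le_compat_l; lra).
    assert (D * Rabs (ti (S n) (idx (S n) s) - s) <= D * / INR (S n)) by (apply Rmult_le_compat_l; lra).
    lra. }
  destruct (AA d Hd Hc f (fun s t => Rabs (Phi t - Phi s)) D (fun n => (2 * D + 1) * / INR (S n)) HD)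
    as [phi [c [Hphi Hcv]]].
  { intros eps Heps. destruct (inv_small (eps / (2 * D + 1))) as [N HN].
    { apply Rdiv_lt_0_compat; lra. }
    exists N. intros n Hn. specialize (HN n Hn).
    apply Rmult_lt_compat_l with (r := 2 * D + 1) in HN; [|lra].
    replace ((2 * D + 1) * (eps / (2 * D + 1))) with eps in HN by (field; lra). lra. }
  { exact Hf. }
  { intros s t _ _. rewrite Rabs_minus_sym. apply HPa. }
  assert (Hc0 : c 0 = a0).
  { symmetry. apply (conv_unique d Hd (fun n => f (phi n) 0)); [|apply Hcv; lra].
    intros e He. exists O. intros n _. unfold f. rewrite idx_0. simpl. rewrite (d_refl d Hd). auto. }
  assert (Hc1 : G 1 (c 1)).
  { apply (compact_closed d Hd (G 1) HG1 (fun n => f (phi n) 1)); [|apply Hcv; lra].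
    intro n. unfold f. rewrite idx_1.
    assert (E1 : ti (S (phi n)) (S (phi n)) = 1) by (unfold ti; field; apply not_0_INR; lia).
    rewrite <- E1. apply Hz; lia. }
  exists (c 1). split; auto.
  apply (dr_le_ctrl d Hd c a0 (c 1) Phi D Hc0 eq_refl HD).
  - intros u v Hu Huv Hv. replace (Phi v - Phi u) with (Rabs (Phi v - Phi u)).
    2:{ apply Rabs_right. specialize (HPhi u v Huv). lra. }
    apply (lim_le d Hd _ _ _ _ _ (Hcv u ltac:(lra)) (Hcv v ltac:(lra))).
    intros eps Heps. destruct (inv_small (eps / (2 * D + 1))) as [N HN].
    { apply Rdiv_lt_0_compat; lra. }
    exists N. intros n Hn. pose proof (sincr_ge _ Hphi n). specialize (HN (phi n) ltac:(lia)).
    apply Rmult_lt_compat_l with (r := 2 * D + 1) in HN; [|lra].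
    replace ((2 * D + 1) * (eps / (2 * D + 1))) with eps in HN by (field; lra).
    specialize (Hf (phi n) u v ltac:(lra) ltac:(lra)). lra.
  - intros u v _ Huv _. apply HPhi; auto.
Qed.
End Sel.

Section Core.
Context {X : Type} (d : X -> X -> R) (Hd : is_metric d).

Lemma cont_ind (G : R -> X -> Prop) D : 0 <= D ->
  (forall tau, 0 <= tau <= 1 -> exists beta delta, 0 <= beta /\ beta < 1 /\ 0 < delta /\
     forall t, 0 <= t <= 1 -> Rabs (t - tau) < delta ->
       Hle d (G tau) (G t) (beta * (D * Rabs (t - tau)))) ->
  forall s t, 0 <= s -> s <= t -> t <= 1 -> Hle d (G s) (G t) (D * (t - s)).
Proof.
  intros HD Hloc s t Hs Hst Ht.
  set (S := fun u => s <= u /\ u <= 1 /\ forall v, s <= v -> v <= u -> Hle d (G s) (G v) (D * (v - s))).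
  assert (HS0 : S s).
  { split; [lra|split; [lra|]]. intros v Hv1 Hv2. replace v with s by lra.
    replace (D * (s - s)) with 0 by ring. apply Hle_refl; auto. }
  destruct (lub_fin S 1 s HS0) as [T [ET [HT1 HT2]]].
  { intros u [_ [Hu _]]; auto. }
  assert (HsT : s <= T) by (apply HT2; auto).
  assert (Hleast : forall M', (forall u, S u -> u <= M') -> T <= M').
  { intros M' HM'. destruct (Lub_Rbar_correct S) as [_ Hl].
    assert (Rbar_le (Lub_Rbar S) (Finite M')) by (apply Hl; intros u Hu; simpl; auto).
    rewrite ET in H. exact H. }
  assert (Hbelow : forall v, s <= v -> v < T -> Hle d (G s) (G v) (D * (v - s))).
  { intros v Hv1 Hv2. apply NNPP; intro Hn.
    assert (T <= v); [|lra]. apply Hleast. intros u [Hu1 [Hu2 Hu3]].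
    apply Rnot_lt_le; intro Hvu. apply Hn. apply Hu3; lra. }
  destruct (Hloc T ltac:(lra)) as [beta [delta [Hb0 [Hb1 [Hdel HT]]]]].
  assert (HTT : Hle d (G s) (G T) (D * (T - s))).
  { destruct (Req_dec s T) as [E|E].
    { rewrite <- E. replace (D * (s - s)) with 0 by ring. apply Hle_refl; auto. }
    set (v := Rmax s (T - delta / 2)).
    assert (Hv : s <= v < T /\ T - v < delta) by (unfold v, Rmax; destruct Rle_dec; lra).
    pose proof (Hbelow v ltac:(lra) ltac:(lra)) as H1.
    pose proof (HT v ltac:(lra) ltac:(rewrite Rabs_left1; lra)) as H2.
    apply Hle_sym in H2. rewrite Rabs_left1 in H2 by lra.
    pose proof (Hle_trans d Hd _ _ _ _ _ H1 H2) as H3.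
    eapply Hle_mono; [|exact H3].
    assert (0 <= (1 - beta) * (D * (T - v))) by (apply Rmult_le_pos; [lra| apply Rmult_le_pos; lra]). nra. }
  assert (Hall : forall v, s <= v -> v <= T -> Hle d (G s) (G v) (D * (v - s))).
  { intros v Hv1 Hv2. destruct (Req_dec v T) as [->|E]; auto. apply Hbelow; lra. }
  assert (HT1' : T = 1).
  { destruct (Req_dec T 1) as [E|E]; auto. exfalso.
    set (w := Rmin 1 (T + delta / 2)).
    assert (Hw : T < w <= 1 /\ w - T < delta) by (unfold w, Rmin; destruct Rle_dec; lra).
    assert (S w).
    { split; [lra|split; [lra|]]. intros v Hv1 Hv2.
      destruct (Rle_dec v T) as [Hle'|Hgt]; [apply Hall; lra|].
      pose proof (HT v ltac:(lra) ltac:(rewrite Rabs_right; lra)) as H2.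
      rewrite Rabs_right in H2 by lra.
      pose proof (Hle_trans d Hd _ _ _ _ _ HTT H2) as H3.
      eapply Hle_mono; [|exact H3].
      assert (0 <= (1 - beta) * (D * (v - T))) by (apply Rmult_le_pos; [lra| apply Rmult_le_pos; lra]). nra. }
    specialize (HT2 w H). lra. }
  apply Hall; lra.
Qed.

Context (Hc : d_compact d (fun _ => True)) (F : X -> X -> Prop)
  (HF : forall x, in_KX d (F x)) (Hpc : pointwise_contraction d F).

Lemma core (q : R -> X) x0 y0 D : 0 < D -> q 0 = x0 -> q 1 = y0 ->
  (forall s t, 0 <= s <= 1 -> 0 <= t <= 1 -> d (q s) (q t) <= D * Rabs (s - t)) ->
  exists M, M < D /\ forall a, F x0 a -> exists b, F y0 b /\ d_r d a b <= M.
Proof.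
  intros HD Hq0 Hq1 Hq.
  set (G := fun t => F (q t)).
  assert (Hloc : forall tau, 0 <= tau <= 1 -> exists beta delta, 0 <= beta /\ beta < 1 /\ 0 < delta /\
     forall t, 0 <= t <= 1 -> Rabs (t - tau) < delta ->
       Hle d (G tau) (G t) (beta * (D * Rabs (t - tau)))).
  { intros tau Htau.
    destruct (Hpc (q tau)) as [beta [[Hb0 Hb1] [N [HNo [HNx HN]]]]].
    destruct (HNo (q tau) HNx) as [e [He HNe]].
    exists beta, (e / (D + 1)). split; [auto|split; [auto|split; [apply Rdiv_lt_0_compat; lra|]]].
    intros t Ht Hlt.
    assert (Hdq : d (q tau) (q t) <= D * Rabs (t - tau)).
    { rewrite Rabs_minus_sym. apply Hq; auto. }
    assert (HDl : D * Rabs (t - tau) < e).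
    { assert (Hq' : (D+1) * Rabs (t - tau) < (D+1) * (e/(D+1))) by (apply Rmult_lt_compat_l; lra).
      replace ((D+1)*(e/(D+1))) with e in Hq' by (field; lra).
      pose proof (Rabs_pos (t - tau)); nra. }
    specialize (HN (q t) (HNe (q t) ltac:(lra))).
    apply H_to_Hle in HN; [| |destruct (HF (q tau)) as [Hne _]; exact Hne|destruct (HF (q t)) as [Hne _]; exact Hne].
    2: exact Hd.
    eapply Hle_mono; [|exact HN]; apply Rmult_le_compat_l; lra. }
  assert (HleG : forall s t, 0 <= s <= 1 -> 0 <= t <= 1 -> Hle d (G s) (G t) (D * Rabs (t - s))).
  { intros s t Hs Ht. destruct (Rle_dec s t) as [H|H].
    - rewrite Rabs_right by lra. apply (cont_ind G D ltac:(lra) Hloc); lra.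
    - rewrite Rabs_left1 by lra. apply Hle_sym.
      replace (D * - (t - s)) with (D * (s - t)) by ring.
      apply (cont_ind G D ltac:(lra) Hloc); lra. }
  set (rk := fun k : nat => / INR (S (S k))).
  assert (Hrk : forall k, 0 < rk k /\ rk k <= 1 / 2).
  { intro k. unfold rk. split; [apply Rinv_0_lt_compat, lt_0_INR; lia|].
    assert (2 <= INR (S (S k))) by (rewrite !S_INR; pose proof (pos_INR k); lra).
    replace (1 / 2) with (/ 2) by field. apply Rinv_le_contravar; lra. }
  set (E := fun k tau => 0 <= tau <= 1 /\ forall t, 0 <= t <= 1 -> Rabs (t - tau) < rk k ->
       Hle d (G tau) (G t) ((1 - rk k) * (D * Rabs (t - tau)))).
  destruct (baire E) as [k [a [b [Ha [Hab [Hb HE]]]]]].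
  { intros tau Htau. destruct (Hloc tau Htau) as [beta [delta [Hb0 [Hb1 [Hdel HT]]]]].
    destruct (inv_small (Rmin delta (1 - beta))) as [N HN].
    { unfold Rmin; destruct Rle_dec; lra. }
    exists N. specialize (HN (S N) ltac:(lia)). fold (rk N) in HN.
    assert (rk N < delta /\ rk N < 1 - beta) by (unfold Rmin in HN; destruct Rle_dec in HN; lra).
    split; auto. intros t Ht Hlt. eapply Hle_mono; [|apply HT; auto; lra].
    apply Rmult_le_compat_r; [|lra]. pose proof (Rabs_pos (t - tau)). nra. }
  { intros k tau Htau Happ. split; auto. intros t Ht Hlt.
    apply Hle_lim; auto. intros e He.
    set (eps' := Rmin (rk k - Rabs (t - tau)) (e / (2 * D + 1))).
    assert (Heps' : 0 < eps' /\ eps' <= rk k - Rabs (t - tau) /\ eps' <= e / (2 * D + 1)).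
    { unfold eps', Rmin; destruct Rle_dec; split; try lra; apply Rdiv_lt_0_compat; lra. }
    destruct (Happ eps' ltac:(lra)) as [tau' [[Htau' Hk'] Hd']].
    assert (Htt : Rabs (t - tau') <= Rabs (t - tau) + Rabs (tau' - tau)).
    { replace (t - tau') with ((t - tau) - (tau' - tau)) by ring.
      unfold Rabs; repeat destruct Rcase_abs; lra. }
    pose proof (Hk' t Ht ltac:(lra)) as H1.
    pose proof (HleG tau tau' Htau Htau') as H2.
    pose proof (Hle_trans d Hd _ _ _ _ _ H2 H1) as H3.
    eapply Hle_mono; [|exact H3].
    destruct (Hrk k) as [Hr1 Hr2].
    assert (Hx : e / (2 * D + 1) * (2 * D + 1) = e) by (field; lra).
    assert (Hy : Rabs (tau' - tau) * (2 * D + 1) <= e) by (rewrite <- Hx; apply Rmult_le_compat_r; lra).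
    assert (Hz : (1 - rk k) * (D * Rabs (t - tau')) <= (1 - rk k) * (D * (Rabs (t - tau) + Rabs (tau' - tau)))).
    { apply Rmult_le_compat_l; [lra|]. apply Rmult_le_compat_l; lra. }
    pose proof (Rabs_pos (tau' - tau)). nra. }
  destruct (Hrk k) as [Hr1 Hr2]. set (r := rk k) in *.
  set (b' := Rmin b (a + r / 2)).
  assert (Hb' : a < b' /\ b' <= b /\ b' - a <= r / 2) by (unfold b', Rmin; destruct Rle_dec; lra).
  assert (HJ : forall u v, a <= u -> u <= v -> v <= b' -> Hle d (G u) (G v) ((1 - r) * (D * (v - u)))).
  { intros u v Hu Huv Hv. destruct (HE u ltac:(lra)) as [_ Hu'].
    rewrite <- (Rabs_right (v - u)) by lra. apply Hu'. { lra. } change (rk k) with r. rewrite Rabs_right; lra. }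
  set (cl := fun t => Rmin (Rmax t a) b').
  set (Phi := fun t => D * t - r * D * (cl t - a)).
  assert (Hcl : forall u v, u <= v -> 0 <= cl v - cl u <= v - u).
  { intros u v Huv. unfold cl, Rmin, Rmax. repeat destruct Rle_dec; lra. }
  assert (HPhi : forall u v, u <= v -> 0 <= Phi v - Phi u <= D * (v - u)).
  { intros u v Huv. specialize (Hcl u v Huv). unfold Phi.
    replace (D * v - r * D * (cl v - a) - (D * u - r * D * (cl u - a)))
       with (D * (v - u) - r * D * (cl v - cl u)) by ring.
    assert (0 <= r * D * (cl v - cl u)) by (apply Rmult_le_pos; [nra|lra]).
    assert (r * D * (cl v - cl u) <= D * (v - u)).
    { assert (r * D * (cl v - cl u) <= 1 * D * (v - u)); [|lra].
      apply Rmult_le_compat; try nra. }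
    lra. }
  assert (HHle : forall u v, 0 <= u -> u <= v -> v <= 1 -> Hle d (G u) (G v) (Phi v - Phi u)).
  { intros u v Hu Huv Hv.
    destruct (Rle_dec (Rmax u a) (Rmin v b')) as [HAB|HAB].
    - assert (E1 : cl u = Rmax u a) by (unfold cl, Rmin, Rmax in *; repeat destruct Rle_dec; lra).
      assert (E2 : cl v = Rmin v b') by (unfold cl, Rmin, Rmax in *; repeat destruct Rle_dec; lra).
      set (A := Rmax u a) in *. set (B := Rmin v b') in *.
      assert (HA : u <= A /\ a <= A) by (unfold A, Rmax; destruct Rle_dec; lra).
      assert (HB : B <= v /\ B <= b') by (unfold B, Rmin; destruct Rle_dec; lra).
      pose proof (HleG u A ltac:(lra) ltac:(lra)) as H1. rewrite Rabs_right in H1 by lra.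
      pose proof (HJ A B ltac:(lra) HAB ltac:(lra)) as H2.
      pose proof (HleG B v ltac:(lra) ltac:(lra)) as H3. rewrite Rabs_right in H3 by lra.
      pose proof (Hle_trans d Hd _ _ _ _ _ (Hle_trans d Hd _ _ _ _ _ H1 H2) H3) as H4.
      eapply Hle_mono; [|exact H4]. unfold Phi. rewrite E1, E2. nra.
    - assert (E1 : cl u = cl v) by (unfold cl, Rmin, Rmax in *; repeat destruct Rle_dec; lra).
      pose proof (HleG u v ltac:(lra) ltac:(lra)) as H1. rewrite Rabs_right in H1 by lra.
      eapply Hle_mono; [|exact H1]. unfold Phi. rewrite E1. nra. }
  assert (HG1 : d_compact d (G 1)) by (unfold G; destruct (HF (q 1)); auto).
  exists (Phi 1 - Phi 0). split.
  - assert (E1 : cl 1 = b') by (unfold cl, Rmin, Rmax in *; repeat destruct Rle_dec; lra).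
    assert (E0 : cl 0 = a) by (unfold cl, Rmin, Rmax in *; repeat destruct Rle_dec; lra).
    unfold Phi. rewrite E1, E0.
    assert (0 < r * D * (b' - a)) by (apply Rmult_lt_0_compat; [nra|lra]). nra.
  - intros a0 Ha0.
    destruct (selection d Hd Hc G Phi D a0 ltac:(lra) HG1 HHle HPhi) as [bb [Hbb Hdr]].
    { unfold G; rewrite Hq0; auto. }
    exists bb. split; auto. unfold G in Hbb. rewrite Hq1 in Hbb. auto.
Qed.

End Core.

Theorem lemma19 (X : Type) (d : X -> X -> R) (F : X -> X -> Prop) :
  is_metric d ->
  inhabited X ->
  d_compact d (fun _ => True) ->
  rect_path_connected d ->
  (forall x, in_KX d (F x)) ->
  pointwise_contraction d F ->
  forall x y : X, x <> y ->
    Rbar_lt (hausdorff (d_r d) (F x) (F y)) (Finite (d_r d x y)).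
Proof.
  intros Hd _ Hc Hrc HF Hpc x y Hxy.
  destruct (geodesic d Hd Hc Hrc x y) as [q [Hq0 [Hq1 Hq]]].
  destruct (dr_props d Hrc x y) as [Hdxy _].
  set (D := d_r d x y) in *.
  assert (HD : 0 < D).
  { assert (0 < d x y); [|lra]. destruct (Rle_lt_or_eq_dec 0 (d x y) (d_pos d Hd x y)) as [H|H]; auto.
    exfalso. apply Hxy. apply (d_eq d Hd). auto. }
  destruct (core d Hd Hc F HF Hpc q x y D HD Hq0 Hq1 Hq) as [M1 [HM1 H1]].
  destruct (core d Hd Hc F HF Hpc (fun t => q (1 - t)) y x D HD) as [M2 [HM2 H2]].
  { replace (1 - 0) with 1 by ring. auto. }
  { replace (1 - 1) with 0 by ring. auto. }
  { intros s t Hs Ht. replace (s - t) with (- ((1 - s) - (1 - t))) by ring. rewrite Rabs_Ropp.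
    apply Hq; lra. }
  set (M := Rmax 0 (Rmax M1 M2)).
  assert (HM : 0 <= M /\ M1 <= M /\ M2 <= M /\ M < D).
  { unfold M, Rmax; repeat destruct Rle_dec; lra. }
  apply Rbar_le_lt_trans with (Finite M); [|simpl; lra].
  apply haus_le; [lra| |].
  - intros a Ha. destruct (H1 a Ha) as [b [Hb Hab]]. exists b; split; auto; lra.
  - intros b Hb. destruct (H2 b Hb) as [a [Ha Hab]]. exists a; split; auto; lra.
Qed.
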